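(* Let $\mathcal{L}=\langle \mathbb{M},\mathbb{E},\mathbb{P},\ell\rangle$ be a proposition conserving model lattice, let $F$ be a finite set of plans (foils), and let $\mathcal{M}_H,\mathcal{M}_i\in\mathbb{M}$ with $\mathcal{M}_H\sqsubseteq\mathcal{M}_i$. If $E\subseteq\mathbb{P}$ is an explanation for $\mathcal{M}_i$ and $F$, then $E$ is also an explanation for $\mathcal{M}_H$ and $F$.
   Context: A planning model is $\mathcal{M}=\langle P,S,A,I,G\rangle$: $P$ a finite set of propositions, $S$ a set of states with each $s\in S$ identified with a subset $s\subseteq P$, $A$ a set of actions, $I\in S$ the initial state, $G\subseteq P$ the goal. Each action $a$ has a precondition set $\mathrm{prec}_a$ and add/delete effects $e_a^+,e_a^-$; $a(s)=(s\cup e_a^+)\setminus e_a^-$ if $\mathrm{prec}_a\subseteq s$, and $a(s)=s$ otherwise. A plan $\pi=\langle a_1,\dots,a_n\rangle$ is valid in $\mathcal{M}$, written $\pi(I)\models_{\mathcal{M}}G$, if $\pi(I)\supseteq G$. The model induces a transition system whose nodes are states and whose edges $s_1\xrightarrow{a}s_2$ are the valid transitions. For $\Lambda\subseteq P$, $f_\Lambda(s)=s\setminus\Lambda$ and $[S]_{f_\Lambda}=\{f_\Lambda(s):s\in S\}$. A model $\mathcal{M}'=\langle P',S',A',I',G'\rangle$ is an abstraction of $\mathcal{M}$ w.r.t. $\Lambda$, written $\mathcal{M}'=[\mathcal{M}]_{f_\Lambda}$, if $P'=P\setminus\Lambda$, $S'=[S]_{f_\Lambda}$, $I'=f_\Lambda(I)$,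 $G'=f_\Lambda(G)$, and for every transition $s_1\xrightarrow{a}s_2$ of $\mathcal{M}$ there is a transition $(s_1\setminus\Lambda)\xrightarrow{a}(s_2\setminus\Lambda)$ of $\mathcal{M}'$ (abstract models may have non-deterministic effects). Write $\mathcal{M}\sqsubseteq\mathcal{M}'$ if $\mathcal{M}'=[\mathcal{M}]_{f_\Lambda}$ for some $\Lambda$. Abstraction functions are assumed commutative and idempotent. A model lattice for $\mathcal{M}^\#$ is $\mathcal{L}=\langle\mathbb{M},\mathbb{E},\mathbb{P},\ell\rangle$ with $\mathcal{M}^\#\in\mathbb{M}$, $\mathcal{M}^\#\sqsubseteq\mathcal{M}'$ for all $\mathcal{M}'\in\mathbb{M}$, and each edge $(\mathcal{M}_i,\mathcal{M}_j)\in\mathbb{E}$ has a label $\ell(\mathcal{M}_i,\mathcal{M}_j)=p\in\mathbb{P}$ with $[\mathcal{M}_i]_{f_p}=\mathcal{M}_j$. The concretization $\gamma_p(\mathcal{M})$ is the $\mathcal{M}'$ with $(\mathcal{M}',\mathcal{M})\in\mathbb{E}$ and $\ell(\mathcal{M}',\mathcal{M})=p$; for $E\subseteq\mathbb{P}$, $\gamma_E(\mathcal{M})$ is the result of applying the concretizations for all $p\in E$. The lattice is proposition conserving if for every $\mathcal{M}\in\mathbb{M}$ and every $p\in\mathbb{P}$ not among the propositions of $\mathcal{M}$ there is $\mathcal{M}'\in\mathbb{M}$ with $(\mathcal{M}',\mathcal{M})\in\mathbb{E}$ and label $p$. For a model $\mathcal{M}_H\in\mathbb{M}$ and a set of plans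 $F$, a set $E\subseteq\mathbb{P}$ is an explanation if for all $\pi\in F$, $\pi$ is not valid in $\gamma_E(\mathcal{M}_H)$, i.e. $\pi(I_{\gamma_E(\mathcal{M}_H)})\not\models_{\gamma_E(\mathcal{M}_H)}G_{\gamma_E(\mathcal{M}_H)}$. *)

(* Defs.v *)
From mathcomp Require Import all_boot.
From Stdlib Require Import ClassicalEpsilon.

Set Implicit Arguments.
Unset Strict Implicit.
Unset Printing Implicit Defensive.

Section Models.
Variables (T : finType) (A : Type).
(* T : the (finite) universe of propositions; A : the actions.
   States are identified with subsets of propositions. *)

Record model := Model {
  mP : {set T};
  mS : {set {set T}};
  mtrans : {set T} -> A -> {set T} -> Prop;
  mI : {set T};
  mG : {set T}
}.

Definition strips_apply (prec eadd edel : A -> {set T}) (a : A) (s : {set T})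
  : {set T} :=
  if prec a \subset s then (s :|: eadd a) :\: edel a else s.

Definition strips_model (M : model) : Prop :=
  exists prec eadd edel : A -> {set T},
    [/\ (forall s, s \in mS M -> s \subset mP M),
        mI M \in mS M,
        mG M \subset mP M,
        (forall s a, s \in mS M -> strips_apply prec eadd edel a s \in mS M) &
        (forall s a s', mtrans M s a s' <->
                        (s \in mS M /\ s' = strips_apply prec eadd edel a s))].

Inductive reach (M : model) : {set T} -> seq A -> {set T} -> Prop :=
| reach_nil s : reach M s [::] s
| reach_cons s a s' pi t :
    mtrans M s a s' -> reach M s' pi t -> reach M s (a :: pi) t.

Definition valid (M : model) (pi : seq A) : Prop :=
  exists t, reach M (mI M) pi t /\ mG M \subset t.

Definition absM (Lam : {set T}) (M : model) : model := {|
  mP := mP M :\: Lam;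
  mS := [set s :\: Lam | s in mS M];
  mtrans := fun t1 a t2 => exists s1 s2,
      [/\ mtrans M s1 a s2, t1 = s1 :\: Lam & t2 = s2 :\: Lam];
  mI := mI M :\: Lam;
  mG := mG M :\: Lam |}.

Definition abstracts (M M' : model) : Prop := exists Lam, M' = absM Lam M.

Record lattice := Lattice {
  LM : model -> Prop;
  LE : model -> model -> Prop;
  LP : {set T};
  Llab : model -> model -> T
}.

Definition is_lattice (L : lattice) (Msharp : model) : Prop :=
  [/\ LM L Msharp,
      (forall M, LM L M -> abstracts Msharp M) &
      (forall Mi Mj, LE L Mi Mj ->
         [/\ LM L Mi, LM L Mj, Llab L Mi Mj \in LP L,
             Llab L Mi Mj \in mP Mi &
             Mj = absM [set Llab L Mi Mj] Mi])].

Definition prop_conserving (L : lattice) : Prop :=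
  forall M, LM L M -> forall p, p \in LP L -> p \notin mP M ->
    exists M', LE L M' M /\ Llab L M' M = p.

(* gamma_p(M): the M' with (M',M) in 𝔼 labelled p (M itself if none exists) *)
Definition gamma1 (L : lattice) (p : T) (M : model) : model :=
  epsilon (inhabits M)
    (fun M' => (LE L M' M /\ Llab L M' M = p) \/
               (~ (exists M'', LE L M'' M /\ Llab L M'' M = p) /\ M' = M)).

Definition gammaE (L : lattice) (E : {set T}) (M : model) : model :=
  foldr (gamma1 L) M (enum E).

Definition explanation (L : lattice) (MH : model) (F : seq (seq A))
  (E : {set T}) : Prop :=
  E \subset LP L /\
  forall pi, List.In pi F -> ~ valid (gammaE L E MH) pi.

End Models.

(* Main.v *)
Require Import Defs.
From mathcomp Require Import all_boot.
From Stdlib Require Import Classical ClassicalEpsilon.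

Set Implicit Arguments.
Unset Strict Implicit.

Section Aux.
Variables (T : finType) (A : Type).

Lemma gamma1_spec (L : lattice T A) Ms p (M : model T A) :
  is_lattice L Ms -> prop_conserving L -> LM L M -> p \in LP L ->
  LM L (gamma1 L p M) /\ mP (gamma1 L p M) = p |: mP M.
Proof.
move=> [_ _ HE] HPC HM Hp.
rewrite /gamma1.
set Q := fun M' => _.
have ex : exists x, Q x.
  case: (classic (exists M'', LE L M'' M /\ Llab L M'' M = p)) => [[M'' H]|H].
    by exists M''; left.
  by exists M; right.
have := epsilon_spec (inhabits M) Q ex.
set M' := epsilon _ _; clearbody M'.
case=> [[He Hl]|[Hn ->]].
  move: (HE _ _ He) => [H1 H2 H3 H4 H5].
  split=> //.
  rewrite Hl in H4 H5.
  rewrite H5 /=.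
  by rewrite setD1K.
split=> //.
have HpM : p \in mP M.
  apply/negPn/negP => Hn'; apply: Hn; exact: HPC.
apply/setP => x; rewrite !inE; case: eqP => // ->; by rewrite HpM.
Qed.

Lemma foldr_spec (L : lattice T A) Ms (l : seq T) (M1 M2 : model T A) :
  is_lattice L Ms -> prop_conserving L -> {subset l <= LP L} ->
  LM L M1 -> LM L M2 -> mP M2 \subset mP M1 ->
  [/\ LM L (foldr (gamma1 L) M1 l), LM L (foldr (gamma1 L) M2 l) &
      mP (foldr (gamma1 L) M2 l) \subset mP (foldr (gamma1 L) M1 l)].
Proof.
move=> Hl HPC; elim: l => [|a l IH] Hsub H1 H2 H12 //=.
have Ha : a \in LP L by apply: Hsub; rewrite inE eqxx.
have [F1 F2 F12] := IH (fun x hx => Hsub x (mem_behead (s:=a :: l) hx)) H1 H2 H12.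
have [G1 E1] := gamma1_spec Hl HPC F1 Ha.
have [G2 E2] := gamma1_spec Hl HPC F2 Ha.
split=> //; rewrite E1 E2; exact: setUS.
Qed.

Lemma setDD_P (P s L1 L2 : {set T}) : s \subset P ->
  (forall x, x \in P -> x \in L1 -> x \in L2) -> s :\: L1 :\: L2 = s :\: L2.
Proof.
move=> Hs HL; apply/setP => x; rewrite !inE.
case h2: (x \in L2) => //=; case hs: (x \in s); rewrite ?andbF ?andbT //=.
case h1: (x \in L1) => //.
by rewrite (HL x (subsetP Hs x hs) h1) in h2.
Qed.

Lemma reach_abs (Ms : model T A) (L1 L2 : {set T}) :
  (forall s, s \in mS Ms -> s \subset mP Ms) ->
  (forall s a s', mtrans Ms s a s' -> s \in mS Ms /\ s' \in mS Ms) ->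
  (forall x, x \in mP Ms -> x \in L1 -> x \in L2) ->
  forall u pi t, reach (absM L1 Ms) u pi t ->
  reach (absM L2 Ms) (u :\: L2) pi (t :\: L2).
Proof.
move=> HSP Htr HL u pi t; elim=> {u pi t} [s|s a s' pi t Hst _ IH].
  exact: reach_nil.
apply: reach_cons IH.
move: Hst => [s1 [s2 [Htr12 -> ->]]].
have [h1 h2] := Htr _ _ _ Htr12.
exists s1, s2; split=> //; apply: setDD_P HL; exact: HSP.
Qed.

Lemma valid_abs (Ms : model T A) (L1 L2 : {set T}) pi :
  strips_model Ms ->
  mP (absM L2 Ms) \subset mP (absM L1 Ms) ->
  valid (absM L1 Ms) pi -> valid (absM L2 Ms) pi.
Proof.
move=> [prec [eadd [edel [HSP HI HG HS Htr]]]] /= Hsub [t [Hr Hgt]].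
have HL : forall x, x \in mP Ms -> x \in L1 -> x \in L2.
  move=> x hx h1; apply/negPn/negP => h2.
  have := subsetP Hsub x; rewrite !inE hx h1 h2 /=; by move/(_ isT).
have Htr' : forall s a s', mtrans Ms s a s' -> s \in mS Ms /\ s' \in mS Ms.
  move=> s a s' /Htr [hs ->]; split=> //; exact: HS.
have := reach_abs HSP Htr' HL Hr.
rewrite /= (setDD_P (HSP _ HI) HL) => Hr2.
exists (t :\: L2); split=> //.
apply/subsetP => x; rewrite !inE => /andP [h2 hg].
rewrite h2 /=.
have hx := subsetP HG x hg.
have h1 : x \notin L1 by apply/negP => h1; move: h2; rewrite (HL x hx h1).
by apply: (subsetP Hgt); rewrite !inE h1 hg.
Qed.

End Aux.

Theorem proposition1 (T : finType) (A : Type) (L : lattice T A)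
  (Msharp : model T A) (F : seq (seq A)) (MH Mi : model T A) (E : {set T}) :
  strips_model Msharp ->
  is_lattice L Msharp ->
  prop_conserving L ->
  LM L MH -> LM L Mi ->
  abstracts MH Mi ->
  explanation L Mi F E ->
  explanation L MH F E.
Proof.
move=> Hs Hl HPC HH Hi [Lam HLam] [HE Hv]; split=> // pi Hin Hval.
apply: (Hv pi Hin).
have Hsub : {subset enum E <= LP L}.
  by move=> x; rewrite mem_enum => /(subsetP HE).
have H12 : mP Mi \subset mP MH by rewrite HLam /=; exact: subsetDl.
have [G1 G2 G12] := foldr_spec Hl HPC Hsub HH Hi H12.
move: Hval; rewrite /gammaE.
have [_ Hab _] := Hl.
have [X1 EX1] := Hab _ G1.
have [X2 EX2] := Hab _ G2.
rewrite EX1 EX2; apply: valid_abs => //.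
by rewrite -EX1 -EX2.
Qed.
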